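(* Let $n\ge 1$ and let $\vec s=(s_1,\dots,s_n)$, $\vec t=(t_1,\dots,t_n)$ be positive integers with $t_i<s_i$ for all $i$. Let $\mathcal{B}_{\vec s,\vec t}(n)$ be the number of distinct sets of balls that can be on the lawn after $n$ turns of the $(\vec s,\vec t)$-tennis ball process. Then $\mathcal{B}_{\vec s,\vec t}(n)=|\mathrm{SVT}((n+1)^2,\rho)|$, where $\rho$ is the density on the shape $(n+1,n+1)$ with first row densities $(\rho_{1,1},\rho_{1,2},\dots,\rho_{1,n+1})=(1,t_1,t_2,\dots,t_n)$ and second row densities $(\rho_{2,1},\dots,\rho_{2,n},\rho_{2,n+1})=(s_1-t_1,s_2-t_2,\dots,s_n-t_n,1)$.
   Context: The $(\vec s,\vec t)$-tennis ball process: balls are numbered $1,2,\dots,s_1+\dots+s_n$. There is a pool, initially empty. At turn $i$ ($1\le i\le n$), the balls numbered $s_1+\dots+s_{i-1}+1,\dots,s_1+\dots+s_i$ are added to the pool, and then any $t_i$ balls of the pool are removed and thrown onto the lawn. $\mathcal{B}_{\vec s,\vec t}(n)$ counts the possible sets of balls on the lawn after $n$ turns. A density on a shape $\lambda$ is an assignment of a nonnegative integer $\rho_{i,j}$ to every cell $(i,j)$ (row $i$, column $j$); let $N=\sum\rho_{i,j}$. A standard set-valued Young tableau of shape $\lambda$ and density $\rho$ assigns to each cell $(i,j)$ a set $S_{i,j}$ with $|S_{i,j}|=\rho_{i,j}$, the sets partitioning $[N]$, such that every element of $S_{i,j}$ is smaller than every element of $S_{i,j+1}$ and of $S_{i+1,j}$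 whenever those cells exist. $\mathrm{SVT}(\lambda,\rho)$ is the set of these tableaux. *)

(* Defs.v *)
From mathcomp Require Import all_boot.
Set Implicit Arguments. Unset Strict Implicit. Unset Printing Implicit Defensive.

(* ---------- Tennis ball process ----------
   Balls are numbered 1..N with N = sumn s; ball number b is represented by
   the ordinal (b-1) : 'I_N.  Turns i = 1..n; s_i = nth 0 s (i-1),
   t_i = nth 0 t (i-1). *)

(* balls numbered <= m, i.e. ordinals of value < m *)
Definition balls_upto (N m : nat) : {set 'I_N} := [set b : 'I_N | val b < m].

(* one turn: after adding balls up to number k, the pool is
   balls_upto k minus the lawn L; throw any tt balls of the pool on the lawn *)
Definition lawn_step (N k tt : nat) (L : {set 'I_N}) : {set {set 'I_N}} :=
  [set L :|: R | R in [set R : {set 'I_N} |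
                        (R \subset balls_upto N k :\: L) && (#|R| == tt)]].

Fixpoint lawns (N : nat) (s t : seq nat) (i : nat) : {set {set 'I_N}} :=
  match i with
  | 0 => [set set0]
  | i'.+1 => \bigcup_(L in lawns N s t i') lawn_step (sumn (take i'.+1 s)) (nth 0 t i') L
  end.

Definition tennis_B (s t : seq nat) (n : nat) : nat := #|lawns (sumn s) s t n|.

(* ---------- Standard set-valued Young tableaux ----------
   Shape lam : seq nat (row lengths), cells (i,j) 0-based with j < nth 0 lam i.  Labels 1..N represented by 'I_N. *)

Definition shape_width (lam : seq nat) : nat := foldr maxn 0 lam.

Definition in_shape (lam : seq nat) (i j : nat) : bool := j < nth 0 lam i.

Definition svt_N (lam : seq nat) (rho : nat -> nat -> nat) : nat :=
  \sum_(c : 'I_(size lam) * 'I_(shape_width lam) | in_shape lam c.1 c.2) rho c.1 c.2.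

Definition cell (lam : seq nat) : finType :=
  (('I_(size lam) * 'I_(shape_width lam))%type : finType).

Definition next_cell (c c' : nat * nat) : bool :=
  ((c'.1 == c.1) && (c'.2 == c.2.+1)) || ((c'.1 == c.1.+1) && (c'.2 == c.2)).

Definition is_svt (lam : seq nat) (rho : nat -> nat -> nat) (N : nat)
  (T : {ffun cell lam -> {set 'I_N}}) : bool :=
  [&& [forall c : cell lam, ~~ in_shape lam c.1 c.2 ==> (T c == set0)],
      [forall c : cell lam, in_shape lam c.1 c.2 ==> (#|T c| == rho c.1 c.2)],
      [forall c : cell lam, forall c' : cell lam, (c != c') ==> [disjoint T c & T c']],
      (\bigcup_(c : cell lam) T c == [set: 'I_N]) &
      [forall c : cell lam, forall c' : cell lam,
         [&& in_shape lam c.1 c.2, in_shape lam c'.1 c'.2 &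
             next_cell (val c.1, val c.2) (val c'.1, val c'.2)] ==>
         [forall x in T c, forall y in T c', val x < val y]]].

Definition SVT_card (lam : seq nat) (rho : nat -> nat -> nat) : nat :=
  #|[set T : {ffun cell lam -> {set 'I_(svt_N lam rho)}} | @is_svt lam rho (svt_N lam rho) T]|.

Definition tennis_rho (s t : seq nat) (n : nat) (i j : nat) : nat :=
  if i == 0 then (if j == 0 then 1 else nth 0 t j.-1)
  else if j == n then 1 else nth 0 s j - nth 0 t j.

(* Main.v *)
Require Import Defs.
From mathcomp Require Import all_boot zify.
Set Implicit Arguments. Unset Strict Implicit. Unset Printing Implicit Defensive.

Definition rk (m : nat) (A : {set 'I_m}) (x : 'I_m) : nat := #|[set y in A | y < x]|.

Lemma rk_le m (A : {set 'I_m}) (x y : 'I_m) : x <= y -> rk A x <= rk A y.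
Proof.
move=> hxy; apply: subset_leq_card; apply/subsetP => z; rewrite !inE.
by case/andP => -> /= h; apply: leq_trans h hxy.
Qed.

Lemma rk_mono m (A : {set 'I_m}) (x y : 'I_m) : x \in A -> x < y -> rk A x < rk A y.
Proof.
move=> xA hxy; apply: proper_card; apply/properP; split.
  apply/subsetP => z; rewrite !inE; case/andP => -> /= h; apply: ltn_trans h hxy.
by exists x; rewrite !inE ?ltnn ?andbF ?xA.
Qed.

Lemma rk_lt_card m (A : {set 'I_m}) x : x \in A -> rk A x < #|A|.
Proof.
move=> xA; apply: proper_card; apply/properP; split.
  by apply/subsetP => z; rewrite !inE; case/andP.
by exists x; rewrite ?inE ?ltnn ?andbF.
Qed.

Lemma rk_inj m (A : {set 'I_m}) : {in A &, injective (rk A)}.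
Proof.
move=> x y xA yA e; apply/val_inj/eqP; case: (ltngtP x y) => // h.
  by have := rk_mono xA h; rewrite e ltnn.
by have := rk_mono yA h; rewrite e ltnn.
Qed.

Lemma card_set_count (T : finType) (A : {set T}) (Q : pred T) :
  #|[set x in A | Q x]| = count Q (enum A).
Proof.
rewrite cardE /enum_mem size_filter count_filter; apply: eq_count => x.
by rewrite /= !inE andbC.
Qed.

Lemma rk_count m (A : {set 'I_m}) (P : pred nat) :
  #|[set x in A | P (rk A x)]| = count P (iota 0 #|A|).
Proof.
rewrite (card_set_count A (fun x => P (rk A x))).
have -> : count (fun x => P (rk A x)) (enum A) = count P (map (rk A) (enum A))
  by rewrite count_map.
have Hu : uniq (map (rk A) (enum A)).
  by rewrite map_inj_in_uniq ?enum_uniq // => x y; rewrite !mem_enum; exact: rk_inj.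
apply/permP; apply: uniq_perm => //; first by apply: iota_uniq.
have HS : {subset map (rk A) (enum A) <= iota 0 #|A|}.
  move=> k /mapP [x]; rewrite mem_enum => xA ->; rewrite mem_iota /=.
  exact: rk_lt_card.
have Hsz : size (iota 0 #|A|) <= size (map (rk A) (enum A)).
  by rewrite size_map size_iota cardE.
exact: (uniq_min_size Hu HS Hsz).2.
Qed.

Lemma count_iota_int lo hi c :
  count (fun k => (lo <= k) && (k < hi)) (iota 0 c) = minn hi c - lo.
Proof.
elim: c => [|c IH]; first by rewrite minn0.
rewrite -addn1 iotaD count_cat IH /= add0n addn0.
case: (leqP lo c) => h1; case: (ltnP c hi) => h2 /=; lia.
Qed.

Lemma rk_count_int m (A : {set 'I_m}) lo hi :
  #|[set x in A | (lo <= rk A x) && (rk A x < hi)]| = minn hi #|A| - lo.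
Proof. by rewrite (rk_count A (fun k => (lo <= k) && (k < hi))) count_iota_int. Qed.

Lemma rk_count_lt m (A : {set 'I_m}) hi :
  #|[set x in A | rk A x < hi]| = minn hi #|A|.
Proof. by rewrite -[RHS]subn0 -(rk_count_int A 0 hi); apply: eq_card => x; rewrite !inE. Qed.

Lemma rk_prefix_sub N (A : {set 'I_N}) a mm x :
  mm <= #|A :&: balls_upto N a| -> x \in A -> rk A x < mm -> x < a.
Proof.
move=> h xA hr; rewrite ltnNge; apply/negP => hax.
have : #|A :&: balls_upto N a| <= rk A x.
  apply: subset_leq_card; apply/subsetP => z; rewrite !inE.
  by case/andP => -> /= h'; apply: leq_trans h' hax.
lia.
Qed.

Lemma card_balls N a : #|balls_upto N a| = minn a N.
Proof.
have -> : #|balls_upto N a| = count (fun x : 'I_N => val x < a) (enum [set: 'I_N]).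
  etransitivity; last exact: card_set_count.
  by apply: eq_card => x; rewrite !inE.
rewrite enum_setT -enumT.
have -> : count (fun x : 'I_N => val x < a) (enum 'I_N) = count (fun k => (0 <= k) && (k < a)) (map val (enum 'I_N)).
  by rewrite count_map.
by rewrite val_enum_ord count_iota_int subn0.
Qed.

Lemma pre_S (u : seq nat) j : sumn (take j.+1 u) = sumn (take j u) + nth 0 u j.
Proof.
elim: u j => [|x u IH] [|j] //=.
  by rewrite take0 addn0.
by rewrite IH addnA.
Qed.

Lemma pre_mono (u : seq nat) i j : i <= j -> sumn (take i u) <= sumn (take j u).
Proof.
move=> /subnK <-; elim: (j - i) => [|d IH] //; rewrite addSn pre_S.
exact: leq_trans IH (leq_addr _ _).
Qed.

Definition goodset K (s t : seq nat) i : {set {set 'I_K}} :=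
  [set L : {set 'I_K} | [&& L \subset balls_upto K (sumn (take i s)), #|L| == sumn (take i t) &
     [forall j : 'I_i.+1, sumn (take j t) <= #|L :&: balls_upto K (sumn (take j s))|]]].

Lemma balls_mono K a b : a <= b -> balls_upto K a \subset balls_upto K b.
Proof. by move=> h; apply/subsetP => x; rewrite !inE => hx; apply: leq_trans hx h. Qed.

Lemma lawns_good K s t i : lawns K s t i = goodset K s t i.
Proof.
elim: i => [|i IH].
  apply/setP => L; rewrite !inE /=; apply/eqP/idP => [->|].
    rewrite sub0set cards0 take0 eqxx /=; apply/forallP => j; by rewrite (ord1 j) take0.
  case/andP => h _; apply/eqP; rewrite -subset0; apply: subset_trans h _.
  by apply/subsetP => x; rewrite !inE take0.
rewrite /= IH; apply/setP => L; apply/bigcupP/idP.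
- case=> L'; rewrite inE => /and3P [HL'sub /eqP HL'c /forallP HL'f].
  case/imsetP => R; rewrite inE => /andP [HRsub /eqP HRc] ->.
  have disj : L' :&: R = set0.
    apply/setP => x; rewrite !inE; apply/negP => /andP [h1 h2].
    by move/subsetP: HRsub => /(_ x h2); rewrite !inE h1.
  have hsub : L' \subset balls_upto K (sumn (take i.+1 s)).
    by apply: subset_trans HL'sub (balls_mono _ (pre_mono _ (leqnSn _))).
  rewrite inE; apply/and3P; split.
  + rewrite subUset hsub /=; apply: subset_trans HRsub _; exact: subsetDl.
  + by rewrite cardsU disj cards0 subn0 HL'c HRc pre_S.
  + apply/forallP => j; case: (ltnP j i.+1) => hj.
      have := HL'f (Ordinal hj) => /= h; apply: leq_trans h _.
      by apply: subset_leq_card; apply: setSI; apply: subsetUl.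
    have ej : nat_of_ord j = i.+1 by have := ltn_ord j; lia.
    rewrite ej; have -> : (L' :|: R) :&: balls_upto K (sumn (take i.+1 s)) = L' :|: R.
      apply/setIidPl; rewrite subUset hsub /=; apply: subset_trans HRsub _; exact: subsetDl.
    by rewrite cardsU disj cards0 subn0 HL'c HRc pre_S.
- rewrite inE => /and3P [HLsub /eqP HLc /forallP HLf].
  set L' := [set x in L | rk L x < sumn (take i t)].
  have HL'L : L' \subset L by apply/subsetP => x; rewrite inE => /andP [].
  have Hti : sumn (take i t) <= #|L| by rewrite HLc; apply: pre_mono.
  have HL'c : #|L'| = sumn (take i t) by rewrite rk_count_lt; lia.
  have key : forall j, j <= i -> [set x in L | rk L x < sumn (take j t)] \subset
       L' :&: balls_upto K (sumn (take j s)).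
    move=> j hj; apply/subsetP => x; rewrite !inE => /andP [xL hr].
    rewrite xL /=; apply/andP; split.
      by apply: leq_trans hr _; apply: pre_mono.
    have hjj : j < i.+2 by lia.
    exact: (rk_prefix_sub (HLf (Ordinal hjj)) xL hr).
  exists L'.
    rewrite inE; apply/and3P; split.
    + apply/subsetP => x xL'; have := subsetP (key i (leqnn _)) x xL'.
      by rewrite inE => /andP [].
    + by rewrite HL'c.
    + apply/forallP => j; have hj : j <= i by have := ltn_ord j; lia.
      apply: leq_trans (subset_leq_card (key j hj)).
      rewrite rk_count_lt; have : sumn (take j t) <= #|L|.
        by apply: leq_trans Hti; apply: pre_mono.
      lia.
  apply/imsetP; exists (L :\: L').
    rewrite inE; apply/andP; split.
      by apply: setSD.
    rewrite cardsD (setIidPr HL'L) HL'c HLc pre_S; lia.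
  apply/setP => x; rewrite in_setU in_setD; case hx: (x \in L'); rewrite /= ?andbT //=.
  by rewrite (subsetP HL'L x hx).
Qed.

Arguments shape_width : simpl never.

Section Gen.
Variables (W : nat) (rho : nat -> nat -> nat).
Hypothesis rpos : forall i j, i < 2 -> j < W -> 0 < rho i j.
Local Notation lam := [:: W; W].
Local Notation N := (svt_N lam rho).
Local Notation CT := (cell lam).

Definition P i j := \sum_(0 <= k < j) rho i k.

Lemma PS i j : P i j.+1 = P i j + rho i j.
Proof. by rewrite /P big_nat_recr. Qed.

Lemma P_mono i a b : a <= b -> P i a <= P i b.
Proof.
move=> /subnK <-; elim: (b - a) => [|d IH] //; rewrite addSn PS.
exact: leq_trans IH (leq_addr _ _).
Qed.

Lemma sw : shape_width lam = W.
Proof. by rewrite /shape_width /= maxn0 maxnn. Qed.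

Lemma c2W (c : CT) : nat_of_ord c.2 < W.
Proof. by apply: leq_trans (ltn_ord c.2) _; rewrite sw. Qed.

Lemma inshape (c : CT) : in_shape lam c.1 c.2.
Proof.
rewrite /in_shape; case: c => [[[|[|i]] hi] j] //=; by apply: leq_trans (ltn_ord j) _; rewrite sw.
Qed.

Definition mkc i j (hi : i < 2) (hj : j < W) : CT :=
  (Ordinal hi, Ordinal (eq_ind_r (fun w => j < w) hj sw)).

Lemma cell_eq (c c' : CT) : nat_of_ord c.1 = nat_of_ord c'.1 -> nat_of_ord c.2 = nat_of_ord c'.2 -> c = c'.
Proof. by case: c c' => [a b] [a' b'] /= h1 h2; congr pair; apply: val_inj. Qed.

Lemma sum_row i (F : nat -> nat) : i < 2 ->
  \sum_(c : CT | nat_of_ord c.1 == i) F (nat_of_ord c.2) = \sum_(0 <= k < W) F k.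
Proof.
move=> hi.
rewrite (eq_bigl (fun p : CT => xpredT p.1 && ((fun (a : 'I_2) (_ : 'I_(shape_width lam)) => nat_of_ord a == i) p.1 p.2))) //.
rewrite -(pair_big_dep xpredT (fun (a : 'I_2) (_ : 'I_(shape_width lam)) => nat_of_ord a == i) (fun a b => F (nat_of_ord b))) /=.
rewrite big_ord_recl big_ord1 /=.
case: i hi => [|[|]] //= _.
  by rewrite big_pred0_eq addn0 (eq_bigl (fun _ => true)) // -(big_mkord xpredT F) sw.
by rewrite big_pred0_eq add0n (eq_bigl (fun _ => true)) // -(big_mkord xpredT F) sw.
Qed.


Local Notation isSVT T := (@is_svt lam rho N T).
Local Notation FT := {ffun CT -> {set 'I_N}}.

Lemma c1_2 (c : CT) : nat_of_ord c.1 < 2.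
Proof. exact: ltn_ord. Qed.

Lemma rho_pos (c : CT) : 0 < rho c.1 c.2.
Proof. exact: rpos (c1_2 c) (c2W c). Qed.

Lemma sum_if_lt i j : j <= W -> \sum_(0 <= k < W) (if k < j then rho i k else 0) = P i j.
Proof.
move=> hj; rewrite (@big_cat_nat _ _ _ j 0 W _ _ (leq0n j) hj) /=.
have -> : \sum_(j <= k < W) (if k < j then rho i k else 0) = 0.
  by rewrite big_nat_cond big1 // => k /andP [/andP [hk _] _]; rewrite ltnNge hk.
rewrite addn0 /P; by apply: eq_big_nat => k /andP [_ ->].
Qed.

Section SVT.
Variable T : FT.
Hypothesis hT : isSVT T.

Lemma svt_card c : #|T c| = rho c.1 c.2.
Proof.
case/and5P: hT => _ /forallP hc _ _ _.
by move: (hc c); rewrite inshape /= => /eqP.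
Qed.

Lemma svt_disj c c' : c != c' -> [disjoint T c & T c'].
Proof.
case/and5P: hT => _ _ /forallP hd _ _ hne.
by move: (hd c) => /forallP /(_ c') /implyP /(_ hne).
Qed.

Lemma svt_cover x : exists c, x \in T c.
Proof.
case/and5P: hT => _ _ _ /eqP hu _.
have : x \in \bigcup_(c : CT) T c by rewrite hu inE.
by case/bigcupP => c _ h; exists c.
Qed.

Lemma svt_adj c c' x y : next_cell (nat_of_ord c.1, nat_of_ord c.2) (nat_of_ord c'.1, nat_of_ord c'.2) ->
  x \in T c -> y \in T c' -> x < y.
Proof.
case/and5P: hT => _ _ _ _ /forallP ho hn xc yc.
move: (ho c) => /forallP /(_ c') /implyP.
rewrite !inshape hn => /(_ isT) /forallP /(_ x) /implyP /(_ xc).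
by move=> /forallP /(_ y) /implyP /(_ yc).
Qed.

Lemma svt_ne c : exists z, z \in T c.
Proof. by apply/card_gt0P; rewrite svt_card; exact: rho_pos. Qed.

Lemma svt_uniq c c' x : x \in T c -> x \in T c' -> c = c'.
Proof.
move=> h1 h2; apply/eqP; apply/negP => /negP hne.
by have := disjointFr (svt_disj hne) h1; rewrite h2.
Qed.

Lemma svt_row c c' x y : nat_of_ord c.1 = nat_of_ord c'.1 -> nat_of_ord c.2 < nat_of_ord c'.2 ->
  x \in T c -> y \in T c' -> x < y.
Proof.
case: c' => a' b'; case: c => a b /= h1 h2.
have [d hd] : exists d, nat_of_ord b' = (nat_of_ord b + d).+1 by exists (nat_of_ord b' - nat_of_ord b - 1); lia.
elim: d a b x h1 h2 hd => [|d IH] a b x h1 h2 hd xc yc.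
  by apply: (svt_adj _ xc yc); rewrite /next_cell /= h1 eqxx hd addn0 eqxx.
have hj : (nat_of_ord b).+1 < W by have := c2W (a', b'); rewrite /=; lia.
pose c'' := mkc (ltn_ord a) hj.
have [z zc] := svt_ne c''.
have xz : x < z by apply: (svt_adj _ xc zc); rewrite /next_cell /= !eqxx.
apply: ltn_trans xz _; apply: (IH c''.1 c''.2 z) => //=; lia.
Qed.

Lemma svt_col c c' x y : nat_of_ord c.1 = 0 -> nat_of_ord c'.1 = 1 -> nat_of_ord c.2 <= nat_of_ord c'.2 ->
  x \in T c -> y \in T c' -> x < y.
Proof.
case: c' => a' b'; case: c => a b /= h1 h1' h2 xc yc.
case: (ltngtP (nat_of_ord b) (nat_of_ord b')) => h3; last first.
- by apply: (svt_adj _ xc yc); rewrite /next_cell /= h1 h1' h3 !eqxx orbT.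
- lia.
pose c'' := mkc (isT : 1 < 2) (c2W (a, b)).
have [z zc] := svt_ne c''.
have xz : x < z by apply: (svt_adj _ xc zc); rewrite /next_cell /= h1 !eqxx orbT.
apply: ltn_trans xz _; apply: (svt_row _ _ zc yc) => //=.
Qed.


Definition row i : {set 'I_N} := [set x | [exists c : CT, (nat_of_ord c.1 == i) && (x \in T c)]].

Lemma card_sumb (A : {set 'I_N}) : #|A| = \sum_x (x \in A).
Proof. by rewrite -sum1_card big_mkcond /=; apply: eq_bigr => x _; case: (x \in A). Qed.

Lemma card_rowI i (S : {set 'I_N}) :
  #|row i :&: S| = \sum_(c : CT | nat_of_ord c.1 == i) #|T c :&: S|.
Proof.
rewrite card_sumb.
rewrite (eq_bigr (fun c => \sum_x (x \in T c :&: S))); last by move=> c _; rewrite card_sumb.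
rewrite (exchange_big _ _ _ (fun c : CT => nat_of_ord c.1 == i) xpredT); apply: eq_bigr => x _.
case hx: (x \in row i :&: S).
  move: hx; rewrite !inE => /andP [/existsP [c0 /andP [hc0 xc0]] xS].
  rewrite (bigD1 c0) //= inE xc0 xS big1 // => c /andP [_ hne].
  by rewrite inE; case xc: (x \in T c) => //=; rewrite (svt_uniq xc0 xc) eqxx in hne.
rewrite big1 // => c hc; apply/eqP; rewrite eqb0; apply/negP; rewrite inE => /andP [xc xS].
by move: hx; rewrite !inE xS andbT => /negbT /negP; apply; apply/existsP; exists c; rewrite hc.
Qed.

Lemma row_mem c x i : x \in T c -> (x \in row i) = (nat_of_ord c.1 == i).
Proof.
move=> xc; rewrite inE; apply/existsP/idP => [[c' /andP [h xc']]|h].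
  by rewrite (svt_uniq xc xc').
by exists c; rewrite h xc.
Qed.

Lemma row1C : row 1 = ~: row 0.
Proof.
apply/setP => x; have [c xc] := svt_cover x.
rewrite in_setC !(row_mem _ xc); have := c1_2 c.
by case: (nat_of_ord c.1) => [|[|]].
Qed.

Lemma row_card i : i < 2 -> #|row i| = P i W.
Proof.
move=> hi; rewrite -(setIT (row i)) card_rowI.
rewrite (eq_bigr (fun c : CT => rho i c.2)); first by rewrite sum_row.
by move=> c /eqP hc; rewrite setIT svt_card hc.
Qed.

Lemma rk_cell c x : x \in T c ->
  rk (row c.1) x = P c.1 c.2 + #|[set y in T c | y < x]|.
Proof.
move=> xc; rewrite /rk.
have -> : [set y in row c.1 | y < x] = row c.1 :&: [set y : 'I_N | y < x] by apply/setP => y; rewrite !inE.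
rewrite card_rowI.
set q := #|[set y in T c | y < x]|.
rewrite (eq_bigr (fun c' : CT => (fun k => if k < c.2 then rho c.1 k else if k == c.2 then q else 0) (nat_of_ord c'.2))).
  rewrite (@sum_row c.1 (fun k => if k < c.2 then rho c.1 k else if k == c.2 then q else 0) (c1_2 c)).
  have hW : (nat_of_ord c.2) <= W by apply: ltnW; apply: c2W.
  rewrite (@big_cat_nat _ _ _ _ 0 W _ _ (leq0n _) hW) /= (@big_ltn _ _ _ (nat_of_ord c.2) W) ?c2W // ltnn eqxx.
  have -> : \sum_((nat_of_ord c.2).+1 <= k < W) (if k < c.2 then rho c.1 k else if k == c.2 then q else 0) = 0.
    rewrite big_nat_cond big1 // => k /andP [/andP [hk _] _]; rewrite ltnNge ltnW //=.
    by case: eqP => // e; move: hk; rewrite e ltnn.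
  rewrite addn0.
  by congr (_ + _); apply: eq_big_nat => k /andP [_ ->].
move=> c' /eqP hc' /=.
case: (ltngtP c'.2 c.2) => h.
- rewrite (setIidPl _) ?svt_card ?hc' //.
  by apply/subsetP => y yc'; rewrite inE; apply: (svt_row _ _ yc' xc) => //.
- apply/eqP; rewrite cards_eq0; apply/eqP/setP => y; rewrite !inE.
  apply/negP => /andP [yc' yx].
  by have := svt_row (esym hc') h xc yc'; rewrite ltnNge ltnW.
- have e : c' = c by apply: cell_eq.
  by rewrite e; apply: eq_card => y; rewrite !inE.
Qed.

Lemma rk_cell_lt c x : x \in T c -> #|[set y in T c | y < x]| < rho c.1 c.2.
Proof.
move=> xc; rewrite -svt_card; apply: proper_card; apply/properP; split.
  by apply/subsetP => y; rewrite inE => /andP [].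
by exists x => //; rewrite inE ltnn andbF.
Qed.
End SVT.

Lemma N_eq : N = P 0 W + P 1 W.
Proof.
rewrite /svt_N (eq_bigl (fun c : CT => true)); last by move=> c; rewrite inshape.
rewrite (bigID (fun c : CT => nat_of_ord c.1 == 0)) /=.
rewrite [X in _ + X](eq_bigl (fun c : CT => nat_of_ord c.1 == 1)); last first.
  by move=> c; have := c1_2 c; case: (nat_of_ord c.1) => [|[|]].
rewrite [X in X + _](eq_bigr (fun c : CT => rho 0 c.2)); last by move=> c /eqP ->.
rewrite [X in _ + X](eq_bigr (fun c : CT => rho 1 c.2)); last by move=> c /eqP ->.
by rewrite (sum_row (fun k => rho 0 k)) // (sum_row (fun k => rho 1 k)).
Qed.

Definition Gp : {set {set 'I_N}} :=
  [set R : {set 'I_N} | (#|R| == P 0 W) &&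
     [forall j : 'I_W, P 0 j.+1 <= #|R :&: balls_upto N (P 0 j.+1 + P 1 j)|]].


Lemma balls_sub0 T (hT : isSVT T) (y : 'I_N) j :
  (forall c0 : CT, nat_of_ord c0.1 = 0 -> nat_of_ord c0.2 < j -> T c0 \subset balls_upto N y) ->
  j <= W -> P 0 j <= #|row T 0 :&: balls_upto N y|.
Proof.
move=> hsub hj; rewrite card_rowI //.
apply: leq_trans (_ : \sum_(c : CT | nat_of_ord c.1 == 0) (if nat_of_ord c.2 < j then rho 0 c.2 else 0) <= _).
  by rewrite (sum_row (fun k => if k < j then rho 0 k else 0)) // sum_if_lt.
apply: leq_sum => c /eqP hc; case: ifP => hcj //.
by rewrite (setIidPl (hsub c hc hcj)) svt_card // hc.
Qed.

Lemma col_lower T (hT : isSVT T) (c : CT) (y : 'I_N) (j : nat) :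
  nat_of_ord c.1 = 1 -> j <= c.2 -> j < W -> y \in T c -> P 0 j.+1 + P 1 j <= y.
Proof.
move=> hc hj hjW yc.
have hy : #|balls_upto N y| = y by rewrite card_balls; have := ltn_ord y; lia.
have hID := cardsID (row T 0) (balls_upto N y).
have h1 : P 1 j <= #|balls_upto N y :\: row T 0|.
  have -> : balls_upto N y :\: row T 0 = [set z in row T c.1 | z < y].
    by apply/setP => z; rewrite hc row1C // !inE andbC.
  by rewrite -/(rk _ y) rk_cell // hc; apply: leq_trans (leq_addr _ _); apply: P_mono.
have h0 : P 0 j.+1 <= #|balls_upto N y :&: row T 0|.
  rewrite setIC; apply: balls_sub0 => // c0 hc0 hc0j.
  apply/subsetP => z zc0; rewrite inE; apply: (svt_col hT _ _ _ zc0 yc) => //; rewrite ltnS in hc0j; exact: leq_trans hc0j hj.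
lia.
Qed.

Lemma Phi_in T : isSVT T -> row T 0 \in Gp.
Proof.
move=> hT; rewrite inE row_card //= eqxx /=; apply/forallP => j.
set m := P 0 j.+1 + P 1 j.
have hmN : m <= N.
  rewrite N_eq /m; apply: leq_add; apply: P_mono; [exact: ltn_ord | exact: ltnW (ltn_ord j)].
have hb : #|balls_upto N m| = m by rewrite card_balls; lia.
have hID := cardsID (row T 0) (balls_upto N m).
have h1 : #|balls_upto N m :\: row T 0| <= P 1 j.
  have -> : balls_upto N m :\: row T 0 = row T 1 :&: balls_upto N m.
    by apply/setP => z; rewrite row1C // !inE andbC.
  rewrite card_rowI //.
  apply: leq_trans (_ : \sum_(c : CT | nat_of_ord c.1 == 1) (if nat_of_ord c.2 < j then rho 1 c.2 else 0) <= _).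
    apply: leq_sum => c /eqP hc; case: ifP => hcj.
      by rewrite -hc -(svt_card hT); apply: subset_leq_card; apply: subsetIl.
    rewrite leqn0 cards_eq0; apply/eqP/setP => y; rewrite !inE; apply/negP => /andP [yc ym].
    have := col_lower hT hc _ (ltn_ord j) yc; rewrite leqNgt hcj => /(_ isT).
    by rewrite -/m leqNgt ym.
  by rewrite (sum_row (fun k => if k < j then rho 1 k else 0)) // sum_if_lt // ltnW.
have e : #|balls_upto N m :&: row T 0| = m - #|balls_upto N m :\: row T 0| by rewrite -[X in _ = X - _]hb -hID addnK.
rewrite setIC e; move: h1; rewrite /m; lia.
Qed.


Definition rowset (R : {set 'I_N}) (i : nat) := if i == 0 then R else ~: R.

Definition Psi (R : {set 'I_N}) : FT :=
  [ffun c : CT => [set x in rowset R c.1 |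
     (P c.1 c.2 <= rk (rowset R c.1) x) && (rk (rowset R c.1) x < P c.1 c.2 + rho c.1 c.2)]].

Lemma card_rowset R i : R \in Gp -> i < 2 -> #|rowset R i| = P i W.
Proof.
rewrite inE => /andP [/eqP hR _]; case: i => [|[|]] //= _; rewrite /rowset //=.
have := cardsC R; rewrite card_ord hR; have := N_eq => hN e.
by apply/eqP; rewrite -(eqn_add2l (P 0 W)) e hN.
Qed.

Lemma find_int i r w : r < P i w -> exists2 j, j < w & (P i j <= r) && (r < P i j + rho i j).
Proof.
elim: w => [|w IH]; first by rewrite /P big_geq.
case: (ltnP r (P i w)) => h1 h2.
  by have [j hj hh] := IH h1; exists j => //; apply: ltn_trans hj _.
by exists w => //; rewrite h1 -PS.
Qed.

Lemma Psi_cover R x : R \in Gp ->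
  exists c : CT, (nat_of_ord c.1 == (if x \in R then 0 else 1)) && (x \in Psi R c).
Proof.
move=> hR; set i := (if x \in R then 0 else 1).
have hi : i < 2 by rewrite /i; case: (x \in R).
have xr : x \in rowset R i by rewrite /rowset /i; case xR: (x \in R) => //=; rewrite inE xR.
have := rk_lt_card xr; rewrite card_rowset // => /find_int [j hj hh].
by exists (mkc hi hj); rewrite ffunE /= eqxx inE xr hh.
Qed.

Lemma col_order R (x y : 'I_N) j : R \in Gp -> j < W -> x \in R -> rk R x < P 0 j.+1 ->
  y \in ~: R -> P 1 j <= rk (~: R) y -> x < y.
Proof.
rewrite inE => /andP [_ /forallP hR] hj xR hx yR hy.
have := hR (Ordinal hj) => /= hc.
set m := P 0 j.+1 + P 1 j in hc.
have xm : x < m by apply: (rk_prefix_sub hc xR hx).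
apply: leq_trans xm _; rewrite leqNgt; apply/negP => ym.
have h1 : rk (~: R) y < #|~: R :&: balls_upto N m|.
  apply: proper_card; apply/properP; split.
    apply/subsetP => z; rewrite !inE => /andP [-> /= zy]; exact: ltn_trans zy ym.
  by exists y; rewrite !inE ?ltnn ?andbF //; rewrite inE in yR; rewrite yR.
have hb : #|balls_upto N m| <= m by rewrite card_balls geq_minl.
have hID := cardsID R (balls_upto N m).
have e : ~: R :&: balls_upto N m = balls_upto N m :\: R by rewrite setDE setIC.
have e2 : R :&: balls_upto N m = balls_upto N m :&: R by rewrite setIC.
rewrite e in h1; rewrite e2 in hc.
have : #|balls_upto N m :\: R| <= m - #|balls_upto N m :&: R|.
  apply: (@leq_trans (#|balls_upto N m| - #|balls_upto N m :&: R|)); first by rewrite -hID addKn.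
  exact: leq_sub2r.
move: h1 hy hc. set a := #|balls_upto N m :&: R|. set b := #|balls_upto N m :\: R|. set r := rk (~: R) y. rewrite /m; lia.
Qed.


Lemma Psi_svt R : R \in Gp -> isSVT (Psi R).
Proof.
move=> hR; apply/and5P; split.
- by apply/forallP => c; rewrite inshape.
- apply/forallP => c; rewrite inshape /= ffunE rk_count_int card_rowset ?c1_2 //.
  have := P_mono c.1 (c2W c : (nat_of_ord c.2).+1 <= W); rewrite PS => h.
  by apply/eqP; rewrite (minn_idPl h) addKn.
- apply/forallP => c; apply/forallP => c'; apply/implyP => hne.
  rewrite -setI_eq0; apply/eqP/setP => x; rewrite !ffunE !inE.
  case e1: (nat_of_ord c.1 == c'.1).
    have e2 : nat_of_ord c.2 != c'.2.
      by apply/negP => /eqP e2; move: hne; rewrite (cell_eq (eqP e1) e2) eqxx.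
    rewrite (eqP e1); set A := rowset R c'.1; set r := rk A x.
    apply/negP => /andP [/andP [_ /andP [h1 h2]] /andP [_ /andP [h3 h4]]].
    case: (ltngtP c.2 c'.2) e2 => // h _.
      have := P_mono c'.1 h; rewrite PS; move: h2 h3.
      set u := P _ c.2; set v := P _ c'.2; lia.
    have := P_mono c'.1 h; rewrite PS; move: h1 h4.
    set u := P _ c.2; set v := P _ c'.2; lia.
  apply/negP => /andP [/andP [x1 _] /andP [x2 _]]; move: x1 x2 e1.
  rewrite /rowset; have := c1_2 c; have := c1_2 c'.
  case: (nat_of_ord c.1) => [|[|]] //; case: (nat_of_ord c'.1) => [|[|]] //= _ _;
    by rewrite inE; case: (x \in R).
- apply/eqP/setP => x; rewrite inE; apply/bigcupP.
  by have [c /andP [_ h]] := Psi_cover x hR; exists c.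
- apply/forallP => c; apply/forallP => c'; apply/implyP; rewrite !inshape /= => hn.
  apply/forallP => x; apply/implyP => xc; apply/forallP => y; apply/implyP => yc.
  move: xc yc; rewrite !ffunE !inE.
  rewrite /next_cell /= in hn; case/orP: hn => /andP [/eqP e1 /eqP e2].
    rewrite e1 e2 PS; set A := rowset R c.1.
    move=> /andP [_ /andP [_ hx]] /andP [_ /andP [hy _]].
    rewrite ltnNge; apply/negP => hyx; have := rk_le A hyx.
    move: hx hy; set u := rk A x; set v := rk A y; set p := P _ _; set w := rho _ _; lia.
  have h0 : nat_of_ord c.1 = 0 by have := c1_2 c'; rewrite e1; case: (nat_of_ord c.1).
  rewrite e1 e2 h0 /rowset /= -PS.
  move=> /andP [xR /andP [_ hx]] /andP [yR /andP [hy _]].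
  exact: (col_order hR (c2W c) xR hx yR hy).
Qed.

Lemma Phi_Psi R : R \in Gp -> row (Psi R) 0 = R.
Proof.
move=> hR; apply/setP => x; rewrite /row inE; apply/existsP/idP.
  case=> c /andP [/eqP hc]; rewrite ffunE inE /rowset hc /=.
  by case/andP.
move=> xR; have [c /andP [hc xc]] := Psi_cover x hR; rewrite xR in hc.
by exists c; rewrite hc xc.
Qed.

Lemma Psi_Phi T : isSVT T -> Psi (row T 0) = T.
Proof.
move=> hT; apply/ffunP => c; rewrite ffunE; apply/setP => x; rewrite inE.
have hrs : rowset (row T 0) c.1 = row T c.1.
  rewrite /rowset; have := c1_2 c; case: (nat_of_ord c.1) => [|[|]] //= _.
  by rewrite row1C.
rewrite hrs; apply/idP/idP.
  move=> /andP [xr /andP [h1 h2]].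
  move: (xr); rewrite /row inE => /existsP [c' /andP [/eqP hc' xc']].
  have hr := rk_cell hT xc'; have hq := rk_cell_lt hT xc'.
  rewrite -hc' in h1 h2.
  have e2 : nat_of_ord c'.2 = c.2.
    move: h1 h2 hr hq.
    set r := rk _ x; set q := #|_|.
    case: (ltngtP c'.2 c.2) => // h.
      have := P_mono c'.1 h; rewrite PS; set u := P _ c.2; set v := P _ c'.2; lia.
    have := P_mono c'.1 h; rewrite PS; set u := P _ c.2; set v := P _ c'.2; lia.
  by rewrite -(cell_eq hc' e2).
move=> xc; rewrite (row_mem hT _ xc) eqxx /= rk_cell //.
have := rk_cell_lt hT xc; set q := #|_|; set p := P _ _; set w := rho _ _; lia.
Qed.

Theorem gen_thm : SVT_card lam rho = #|Gp|.
Proof.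
rewrite /SVT_card.
rewrite -(@card_in_imset _ _ (fun T : FT => row T 0)); last first.
  move=> T1 T2; rewrite !inE => h1 h2 e.
  by rewrite -(Psi_Phi h1) -(Psi_Phi h2) e.
apply: eq_card => R; apply/imsetP/idP.
  by case=> T; rewrite inE => hT ->; apply: Phi_in.
move=> hR; exists (Psi R); first by rewrite inE; apply: Psi_svt.
by rewrite Phi_Psi.
Qed.

End Gen.

Section Shift.
Variables (K : nat) (W : nat) (f g : nat -> nat) (c : nat) (j0 j1 : nat).
Hypotheses (hj0 : j0 < W) (hj1 : j1 < W) (hg0 : g j0 = 0) (hf1 : f j1 = c) (hg1 : g j1 = K).

Definition sh (x : 'I_K) : 'I_K.+2 := lift ord0 (widen_ord (leqnSn K) x).

Lemma sh_val x : nat_of_ord (sh x) = x.+1.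
Proof. by []. Qed.

Lemma sh_inj : injective sh.
Proof. by move=> x y e; apply/val_inj; have := congr1 (@nat_of_ord _) e; rewrite !sh_val => -[]. Qed.

Definition Fsh (L : {set 'I_K}) : {set 'I_K.+2} := ord0 |: (sh @: L).

Lemma ord0_notin (L : {set 'I_K}) : (ord0 : 'I_K.+2) \notin sh @: L.
Proof. by apply/imsetP => -[x _ e]; have := congr1 (@nat_of_ord _) e; rewrite sh_val. Qed.

Lemma card_Fsh L : #|Fsh L| = #|L|.+1.
Proof. by rewrite cardsU1 ord0_notin card_imset //; exact: sh_inj. Qed.

Lemma card_FshI L a : #|Fsh L :&: balls_upto K.+2 a.+1| = (#|L :&: balls_upto K a|).+1.
Proof.
have -> : Fsh L :&: balls_upto K.+2 a.+1 = ord0 |: (sh @: (L :&: balls_upto K a)).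
  apply/setP => y; rewrite in_setI !in_setU1; case: (y =P ord0) => [->|hy] //=.
    by rewrite inE.
  apply/andP/imsetP.
    case=> /imsetP [x xL ->]; rewrite inE ltnS => xa.
    by exists x => //; rewrite inE xL inE; exact: xa.
  case=> x; rewrite !inE => /andP [xL xa] ->; split; first by apply: imset_f.
  by rewrite ltnS; exact: xa.
by rewrite cardsU1 ord0_notin card_imset //; exact: sh_inj.
Qed.

Lemma Fsh_inj : injective Fsh.
Proof.
move=> L1 L2 e; apply/setP => x.
have := congr1 (fun S : {set 'I_K.+2} => sh x \in S) e; rewrite /= /Fsh !in_setU1.
have -> : (sh x == ord0) = false by apply/negbTE/eqP => h; have := congr1 (@nat_of_ord _) h.
by rewrite /= !mem_imset //; exact: sh_inj.
Qed.

Theorem shift_card :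
  #|[set L : {set 'I_K} | (#|L| == c) && [forall j : 'I_W, f j <= #|L :&: balls_upto K (g j)|]]|
  = #|[set R : {set 'I_K.+2} | (#|R| == c.+1) && [forall j : 'I_W, (f j).+1 <= #|R :&: balls_upto K.+2 (g j).+1|]]|.
Proof.
rewrite -(card_imset _ Fsh_inj); apply: eq_card => R; apply/imsetP/idP.
  case=> L; rewrite !inE => /andP [/eqP hc /forallP hL] ->.
  rewrite card_Fsh hc eqxx /=; apply/forallP => j; rewrite card_FshI ltnS; exact: hL.
rewrite inE => /andP [/eqP hc /forallP hR].
have h0 : ord0 \in R.
  have := hR (Ordinal hj0); rewrite /= hg0 => h.
  have /card_gt0P [y] : 0 < #|R :&: balls_upto K.+2 1| by apply: leq_trans h.
  rewrite !inE ltnS leqn0 => /andP [yR /eqP y0].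
  by have -> : ord0 = y by apply/val_inj.
have hsub : R \subset balls_upto K.+2 K.+1.
  have := hR (Ordinal hj1); rewrite /= hf1 hg1 -hc => h.
  have : R :&: balls_upto K.+2 K.+1 == R by rewrite eqEcard subsetIl h.
  by move/eqP => <-; apply: subsetIr.
pose L := [set x : 'I_K | sh x \in R].
have eR : R = Fsh L.
  apply/setP => y; rewrite /Fsh in_setU1; case: (y =P ord0) => [->|hy] //=.
  apply/idP/imsetP.
    move=> yR; have := subsetP hsub y yR; rewrite inE => hyK.
    have y0 : 0 < nat_of_ord y by rewrite lt0n; apply/eqP => e; apply: hy; apply/val_inj.
    have hyK' : nat_of_ord y < K.+1 := hyK.
    have hx : (nat_of_ord y).-1 < K by lia.
    have ey : y = sh (Ordinal hx) by apply/val_inj; rewrite /=; change (nat_of_ord y = (nat_of_ord y).-1.+1); lia.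
    by exists (Ordinal hx) => //; rewrite inE -ey.
  by case=> x; rewrite inE => h ->.
exists L => //; rewrite inE; move: hc hR; rewrite eR card_Fsh => -[->]; rewrite eqxx /= => hR.
by apply/forallP => j; have := hR j; rewrite card_FshI.
Qed.

End Shift.

Lemma sumn_take_big (u : seq nat) j : sumn (take j u) = \sum_(0 <= k < j) nth 0 u k.
Proof. by elim: j => [|j IH]; [rewrite take0 big_geq | rewrite pre_S IH big_nat_recr]. Qed.

Theorem theorem5 (n : nat) (s t : seq nat) :
  1 <= n -> size s = n -> size t = n ->
  (forall i, i < n -> 0 < nth 0 t i /\ nth 0 t i < nth 0 s i) ->
  tennis_B s t n = SVT_card [:: n.+1; n.+1] (tennis_rho s t n).
Proof.
move=> hn hs ht hst.
set rho := tennis_rho s t n.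
have rpos : forall i j, i < 2 -> j < n.+1 -> 0 < rho i j.
  move=> [|[|]] // j _ hj; rewrite /rho /tennis_rho /=.
    by case: j hj => [|j] //= hj; have [] := hst j hj.
  case: eqP => // hjn; have hj' : j < n by lia.
  by have [_] := hst j hj'; rewrite subn_gt0.
rewrite (gen_thm rpos) /tennis_B lawns_good.
have hP0 : forall j, P rho 0 j.+1 = (sumn (take j t)).+1.
  move=> j; rewrite /P big_nat_recl // sumn_take_big /rho /tennis_rho /= add1n.
  by congr _.+1; apply: eq_big_nat => k _.
have hP1 : forall j, j <= n -> P rho 1 j + sumn (take j t) = sumn (take j s).
  elim=> [|j IH] hj; first by rewrite /P big_geq // !take0.
  rewrite PS !pre_S -(IH (ltnW hj)) /rho /tennis_rho /=.
  have hjn : (j == n) = false by apply/eqP; lia.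
  rewrite hjn; have [_ h] := hst j hj; lia.
have ts : take n s = s by rewrite -hs take_size.
have hN : svt_N [:: n.+1; n.+1] rho = (sumn s).+2.
  have e1 : rho 1 n = 1 by rewrite /rho /tennis_rho /= eqxx.
  rewrite N_eq hP0 PS e1.
  have := hP1 n (leqnn n); rewrite ts; lia.
set K := sumn s.
have -> : #|goodset K s t n| =
  #|[set L : {set 'I_K} | (#|L| == sumn (take n t)) &&
     [forall j : 'I_n.+1, sumn (take j t) <= #|L :&: balls_upto K (sumn (take j s))|]]|.
  apply: eq_card => L; rewrite !inE.
  have -> : L \subset balls_upto K (sumn (take n s)).
    by apply/subsetP => x _; rewrite inE ts; exact: ltn_ord.
  by [].
have -> : #|Gp n.+1 rho| =
  #|[set R : {set 'I_(svt_N [:: n.+1; n.+1] rho)} | (#|R| == (sumn (take n t)).+1) &&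
     [forall j : 'I_n.+1, (sumn (take j t)).+1 <= #|R :&: balls_upto _ (sumn (take j s)).+1|]]|.
  apply: eq_card => R; rewrite !inE hP0; congr (_ && _); apply: eq_forallb => j.
  have hj : j <= n by have := ltn_ord j; lia.
  by rewrite hP0 -(hP1 j hj) addSn addnC.
move: (svt_N _ _) hN => N' ->.
apply: (@shift_card K n.+1 (fun j => sumn (take j t)) (fun j => sumn (take j s))
   (sumn (take n t)) 0 n (ltn0Sn n) (ltnSn n)) => //=.
  by rewrite take0.
by rewrite ts.
Qed.
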